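(* Suppose that $G$ is a closed graph on a compact metrizable space $X$. If $X$ can be written as a countable union of $G$-loose sets, then the poset $P_G$ is c.c.c. and adds no dominating real.
   Context: A graph $G$ on $X$ is a symmetric irreflexive relation, closed if closed in $(X\times X)\setminus$ diagonal. A set $A\subset X$ is $G$-loose if every $x\in X$ has an open neighborhood containing no elements of $A$ that are $G$-connected to $x$. A $G$-anticlique is a set with no two distinct $G$-connected points. $P_G$ is the poset of pairs $p=\langle a_p,o_p\rangle$ with $a_p\subset X$ a finite $G$-anticlique and $o_p\supset a_p$ open, ordered by $q\leq p$ iff $a_p\subset a_q$ and $o_q\subset o_p$. *)

(* Defs.v *)
From HB Require Import structures.
From mathcomp Require Import all_boot.
From mathcomp Require Import boolp classical_sets cardinality topology.
From Stdlib Require Import Rdefinitions.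

Set Implicit Arguments.
Unset Strict Implicit.
Unset Printing Implicit Defensive.

Local Open Scope classical_set_scope.

Definition metrizable (X : topologicalType) : Prop :=
  exists d : X -> X -> R,
    (forall x y, Rle R0 (d x y)) /\
    (forall x y, d x y = R0 <-> x = y) /\
    (forall x y, d x y = d y x) /\
    (forall x y z, Rle (d x z) (Rplus (d x y) (d y z))) /\
    (forall A : set X,
        open A <-> (forall x, A x -> exists e, Rlt R0 e /\
                     (forall y, Rlt (d x y) e -> A y))).

Definition is_graph (X : Type) (G : X -> X -> Prop) : Prop :=
  (forall x y, G x y -> G y x) /\ (forall x, ~ G x x).

(* G is closed: its edge set is closed in (X x X) minus the diagonal, i.e. it
   is the trace on the off-diagonal of a closed subset of X x X. *)
Definition closed_graph (X : topologicalType) (G : X -> X -> Prop) : Prop :=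
  is_graph G /\
  exists C : set (X * X), closed C /\
    [set p | G p.1 p.2] = C `&` [set p | p.1 <> p.2].

Definition loose (X : topologicalType) (G : X -> X -> Prop) (A : set X) : Prop :=
  forall x : X, exists U : set X, open U /\ U x /\
    (forall a, U a -> A a -> ~ G x a).

Definition anticlique (X : Type) (G : X -> X -> Prop) (A : set X) : Prop :=
  forall x y, A x -> A y -> x <> y -> ~ G x y.

Record PG_cond (X : topologicalType) (G : X -> X -> Prop) := PGCond {
  a_ : set X;
  o_ : set X;
  a_finite : finite_set a_;
  a_anticlique : anticlique G a_;
  o_open : open o_;
  a_sub_o : a_ `<=` o_ }.

Definition PG_le (X : topologicalType) (G : X -> X -> Prop)
    (q p : PG_cond G) : Prop :=
  a_ p `<=` a_ q /\ o_ q `<=` o_ p.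

Definition compatible (P : Type) (le : P -> P -> Prop) (p q : P) : Prop :=
  exists r, le r p /\ le r q.

Definition antichain (P : Type) (le : P -> P -> Prop) (A : set P) : Prop :=
  forall p q, A p -> A q -> p <> q -> ~ compatible le p q.

Definition ccc (P : Type) (le : P -> P -> Prop) : Prop :=
  forall A : set P, antichain le A -> countable A.

Definition dense_below (P : Type) (le : P -> P -> Prop) (D : set P) (p : P) : Prop :=
  forall q, le q p -> exists r, le r q /\ D r.

(* A P-name for an element of omega^omega, given by its "forcing values":
   nm n k is the (open) set of conditions forcing  f(n) = k. *)
Definition real_name (P : Type) (le : P -> P -> Prop)
    (nm : nat -> nat -> set P) : Prop :=
  (forall n k p q, nm n k p -> le q p -> nm n k q) /\
  (forall n k k' r, k <> k' -> nm n k r -> nm n k' r -> False) /\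
  (forall n p, dense_below le (\bigcup_k nm n k) p).

(* r forces  g(n) <= f(n)  (g a ground-model real): the conditions forcing
   some value f(n) = k with k >= g(n) are dense below r. *)
Definition forces_ge (P : Type) (le : P -> P -> Prop)
    (nm : nat -> nat -> set P) (g : nat -> nat) (n : nat) (r : P) : Prop :=
  dense_below le (\bigcup_(k in [set k | (g n <= k)%N]) nm n k) r.

(* p forces  g <=* f  (i.e. exists m, forall n >= m, g(n) <= f(n)). *)
Definition forces_dominates (P : Type) (le : P -> P -> Prop)
    (nm : nat -> nat -> set P) (g : nat -> nat) (p : P) : Prop :=
  dense_below le
    [set q | exists m, forall n, (m <= n)%N -> forces_ge le nm g n q] p.

Definition adds_dominating_real (P : Type) (le : P -> P -> Prop) : Prop :=
  exists nm : nat -> nat -> set P, real_name le nm /\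
  exists p : P, forall g : nat -> nat, forces_dominates le nm g p.

(* Main.v *)
Require Import Defs.
From mathcomp Require Import all_boot.
From mathcomp Require Import boolp classical_sets cardinality topology.
From Stdlib Require Import Rdefinitions Raxioms RIneq Rbasic_fun Lra.
From Stdlib Require Rtrigo_def.

Set Implicit Arguments.
Unset Strict Implicit.
Unset Printing Implicit Defensive.
Local Open Scope classical_set_scope.

Definition isMetric (X : topologicalType) (d : X -> X -> R) : Prop :=
    (forall x y, Rle R0 (d x y)) /\
    (forall x y, d x y = R0 <-> x = y) /\
    (forall x y, d x y = d y x) /\
    (forall x y z, Rle (d x z) (Rplus (d x y) (d y z))) /\
    (forall A : set X,
        open A <-> (forall x, A x -> exists e, Rlt R0 e /\
                     (forall y, Rlt (d x y) e -> A y))).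

Lemma d_ge0 X d (Hd : @isMetric X d) x y : (0 <= d x y)%R.
Proof. by case: Hd => h _. Qed.
Lemma d_xx X d (Hd : @isMetric X d) x : d x x = 0%R.
Proof. by case: Hd => _ [h _]; apply/h. Qed.
Lemma d_sym X d (Hd : @isMetric X d) x y : d x y = d y x.
Proof. by case: Hd => _ [_ [h _]]. Qed.
Lemma d_tri X d (Hd : @isMetric X d) x y z : (d x z <= d x y + d y z)%R.
Proof. by case: Hd => _ [_ [_ [h _]]]. Qed.
Lemma d_open X d (Hd : @isMetric X d) (A : set X) :
  open A <-> (forall x, A x -> exists e, (0 < e)%R /\ (forall y, (d x y < e)%R -> A y)).
Proof. by case: Hd => _ [_ [_ [_ h]]]. Qed.

Lemma ball_open X d (Hd : @isMetric X d) c r : open [set y | (d c y < r)%R].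
Proof.
apply/(d_open Hd) => y /= hy; exists (r - d c y)%R; split; first lra.
move=> z hz; have := d_tri Hd c y z; lra.
Qed.

Lemma open_ball X d (Hd : @isMetric X d) (U : set X) x :
  open U -> U x -> exists e, (0 < e)%R /\ (forall y, (d x y < e)%R -> U y).
Proof. by move=> /(d_open Hd) h /h. Qed.

Lemma nbhs_ball X d (Hd : @isMetric X d) x (S : set X) :
  nbhs x S -> exists e, (0 < e)%R /\ (forall y, (d x y < e)%R -> S y).
Proof.
rewrite nbhsE => -[B [oB Bx] BS].
have [e [e0 he]] := open_ball Hd oB Bx; exists e; split=> // y /he; exact: BS.
Qed.

Lemma ball_nbhs X d (Hd : @isMetric X d) x e :
  (0 < e)%R -> nbhs x [set y | (d x y < e)%R].
Proof.
move=> e0; apply: open_nbhs_nbhs; split; first exact: ball_open.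
by rewrite /= d_xx.
Qed.

Lemma box X d (Hd : @isMetric X d) (G : X -> X -> Prop) :
  closed_graph G -> forall x y, ~ G x y -> x <> y ->
  exists e, (0 < e)%R /\ forall u v, (d x u < e)%R -> (d y v < e)%R -> ~ G u v.
Proof.
move=> [_ [C [cC hC]]] x y nG nxy.
have nC : ~ C (x, y).
  move=> Cxy; apply: nG.
  have : ([set p | G p.1 p.2] : set (X * X)) (x, y) by rewrite hC.
  by [].
have : nbhs (x, y) (~` C).
  by apply: open_nbhs_nbhs; split=> //; rewrite openC.
move=> [[P Q] /= [hP hQ] hs].
have [e1 [e10 h1]] := nbhs_ball Hd hP.
have [e2 [e20 h2]] := nbhs_ball Hd hQ.
exists (Rmin e1 e2); split; first by apply: Rmin_glb_lt.
move=> u v hu hv Guv.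
have Cuv : C (u, v).
  have : ([set p | G p.1 p.2] : set (X * X)) (u, v) by [].
  by rewrite hC => -[].
apply: (hs (u, v)) => //=; split.
- apply: h1; have := Rmin_l e1 e2; lra.
- apply: h2; have := Rmin_r e1 e2; lra.
Qed.

Lemma loose_ball X d (Hd : @isMetric X d) (G : X -> X -> Prop) A :
  loose G A -> forall x, exists e, (0 < e)%R /\
    forall a, (d x a < e)%R -> A a -> ~ G x a.
Proof.
move=> hL x; have [U [oU [Ux hU]]] := hL x.
have [e [e0 he]] := open_ball Hd oU Ux.
by exists e; split=> // a /he; apply: hU.
Qed.

Lemma net X d (Hd : @isMetric X d) : compact [set: X] ->
  forall r, (0 < r)%R -> exists s : seq X, forall x, exists c, c \in s /\ (d c x < r)%R.
Proof.
move=> cX r r0; apply: contrapT => hno.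
pose B (s : seq X) := [set y | forall c, c \in s -> ~ (d c y < r)%R].
have FF : Filter (filter_from [set: seq X] B).
  apply: filter_from_filter; first by exists [::].
  move=> i j _ _; exists (i ++ j) => // y /= hy; split=> c hc; apply: hy;
  by rewrite mem_cat hc ?orbT.
have PF : ProperFilter (filter_from [set: seq X] B).
  apply: filter_from_proper => s _.
  apply: contrapT => hs; apply: hno; exists s => x.
  apply: contrapT => hx; apply: hs; exists x => c cs dc; apply: hx; exists c; by split.
have [p [_ clp]] := cX _ PF (filterT).
have Bp : filter_from [set: seq X] B (B [:: p]) by exists [:: p].
have [y [By dy]] := clp _ _ Bp (ball_nbhs Hd p r0).
by apply: (By p); rewrite ?mem_seq1.
Qed.

Definition rad (m : nat) : R := (/ INR m.+1)%R.

Lemma rad_gt0 m : (0 < rad m)%R.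
Proof. apply: Rinv_0_lt_compat; apply: lt_0_INR; apply/ssrnat.ltP. done. Qed.

Lemma rad_small e : (0 < e)%R -> exists m, (3 * rad m < e)%R.
Proof.
move=> e0; have [N [hN N0]] := Rtrigo_def.archimed_cor1 (e / 3)%R ltac:(lra).
exists N.-1; rewrite /rad prednK; first lra.
by apply/ssrnat.ltP.
Qed.

Lemma fin_min (T : eqType) (s : seq T) (P : T -> R -> Prop) :
  (forall t e e', (0 < e')%R -> (e' <= e)%R -> P t e -> P t e') ->
  (forall t, t \in s -> exists e, (0 < e)%R /\ P t e) ->
  exists e, (0 < e)%R /\ forall t, t \in s -> P t e.
Proof.
move=> mono; elim: s => [|a s IH] h.
  by exists 1%R; split; [lra|].
have [e1 [e10 h1]] := h a (mem_head _ _).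
have [e2 [e20 h2]] : exists e, (0 < e)%R /\ forall t, t \in s -> P t e.
  by apply: IH => t ts; apply: h; rewrite in_cons ts orbT.
exists (Rmin e1 e2); split; first exact: Rmin_glb_lt.
move=> t; rewrite in_cons => /orP [/eqP ->|ts].
- apply: (mono _ e1) => //; [exact: Rmin_glb_lt|exact: Rmin_l].
- apply: (mono _ e2); [exact: Rmin_glb_lt|exact: Rmin_r|exact: h2].
Qed.

Definition entry := (nat * (nat * nat))%type.

Definition cen (X : Type) (Ln : nat -> seq X) (e : entry) (x : X) :=
  nth x (Ln e.2.1) e.2.2.

Lemma cen_indep (X : Type) (Ln : nat -> seq X) e x y :
  (e.2.2 < size (Ln e.2.1))%N -> cen Ln e x = cen Ln e y.
Proof. by move=> h; rewrite /cen (set_nth_default y). Qed.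

Definition good_pt (X : topologicalType) (G : X -> X -> Prop) (d : X -> X -> R)
  (A : nat -> set X) (Ln : nat -> seq X) (p : PG_cond G) (e : entry) (x : X) :=
  A e.1 x /\ (e.2.2 < size (Ln e.2.1))%N /\ (d (cen Ln e x) x < rad e.2.1)%R /\
  (forall y, (d (cen Ln e x) y < 2 * rad e.2.1)%R -> o_ p y) /\
  (forall y, (d (cen Ln e x) y <= rad e.2.1)%R -> A e.1 y -> ~ G x y).

Definition good_pair (X : topologicalType) (G : X -> X -> Prop) (d : X -> X -> R)
  (Ln : nat -> seq X) (e e' : entry) (x x' : X) :=
  forall u v, (d (cen Ln e x) u <= rad e.2.1)%R ->
    (d (cen Ln e' x') v <= rad e'.2.1)%R -> ~ G u v.

Definition matches (X : topologicalType) (G : X -> X -> Prop) (d : X -> X -> R)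
  (A : nat -> set X) (Ln : nat -> seq X) (p : PG_cond G) (c : seq entry) :=
  exists s : seq X, size s = size c /\ a_ p = [set x | x \in s] /\
  (forall x0 e0 i, (i < size c)%N -> good_pt d A Ln p (nth e0 c i) (nth x0 s i)) /\
  (forall x0 e0 i i', (i < size c)%N -> (i' < size c)%N -> i <> i' ->
     good_pair G d Ln (nth e0 c i) (nth e0 c i') (nth x0 s i) (nth x0 s i')).

Lemma exists_code (X : topologicalType) (G : X -> X -> Prop) d (Hd : isMetric d)
  (A : nat -> set X) (Ln : nat -> seq X) :
  closed_graph G -> (forall n, loose G (A n)) -> (forall x, exists n, A n x) ->
  (forall m x, exists c, c \in Ln m /\ (d c x < rad m)%R) ->
  forall p : PG_cond G, exists c, matches d A Ln p c.
Proof.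
move=> cG lA cov hLn p.
have [s0 hs0] := (finite_seqP (a_ p)).1 (a_finite p).
set s := undup s0.
have ap : a_ p = [set x | x \in s].
  by rewrite hs0; apply/seteqP; split=> x /=; rewrite mem_undup.
have us : uniq s by apply: undup_uniq.
have [nf hnf] := choice cov.
pose Pall x e := (forall y, (d x y < e)%R -> o_ p y) /\
  (forall a, (d x a < e)%R -> A (nf x) a -> ~ G x a) /\
  (forall y, y \in s -> y <> x -> forall u v, (d x u < e)%R -> (d y v < e)%R -> ~ G u v).
have [e [e0 he]] : exists e, (0 < e)%R /\ forall x, x \in s -> Pall x e.
  apply: fin_min.
    move=> t e1 e2 e20 e21 [h1 [h2 h3]]; split; [|split].
    - move=> y hy; apply: h1; lra.
    - move=> a ha; apply: h2; lra.
    - move=> y ys yt u v hu hv; apply: (h3 y) => //; lra.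
  move=> x xs.
  have ox : o_ p x by apply: a_sub_o; rewrite ap.
  have [e1 [e10 h1]] := open_ball Hd (o_open p) ox.
  have [e2 [e20 h2]] := loose_ball Hd (lA (nf x)) x.
  have [e3 [e30 h3]] : exists e, (0 < e)%R /\ forall y, y \in s -> y <> x ->
      forall u v, (d x u < e)%R -> (d y v < e)%R -> ~ G u v.
    apply: fin_min.
      by move=> t a b b0 ba h yx u v hu hv; apply: (h yx); lra.
    move=> y ys; have [->|yx] := pselect (y = x).
      by exists 1%R; split; [lra|].
    have nG : ~ G x y.
      apply: (a_anticlique (p := p)); rewrite ?ap //.
      by move=> h; apply: yx.
    have [e' [e'0 h']] := box Hd cG nG (fun h => yx (esym h)).
    by exists e'; split=> // _; apply: h'.
  exists (Rmin e1 (Rmin e2 e3)); split.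
    by apply: Rmin_glb_lt => //; apply: Rmin_glb_lt.
  have m1 := Rmin_l e1 (Rmin e2 e3); have m2 := Rmin_r e1 (Rmin e2 e3).
  have m3 := Rmin_l e2 e3; have m4 := Rmin_r e2 e3.
  split; [|split].
  - move=> y hy; apply: h1; lra.
  - move=> a ha; apply: h2; lra.
  - move=> y ys yx u v hu hv; apply: (h3 y) => //; lra.
have [m hm] := rad_small e0.
have [cf hcf] := choice (hLn m).
have r0 := rad_gt0 m.
exists [seq (nf x, (m, index (cf x) (Ln m))) | x <- s].
exists s; rewrite size_map; split=> //; split=> //.
have key : forall x0 e0 i, (i < size s)%N ->
    nth e0 [seq (nf x, (m, index (cf x) (Ln m))) | x <- s] i =
      (nf (nth x0 s i), (m, index (cf (nth x0 s i)) (Ln m))).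
  by move=> x0 e1 i hi; rewrite (nth_map x0).
have cenE : forall x, cen Ln (nf x, (m, index (cf x) (Ln m))) x = cf x.
  by move=> x; rewrite /cen /= nth_index //; case: (hcf x).
split.
- move=> x0 e1 i hi; rewrite (key x0) //.
  set x := nth x0 s i.
  have xs : x \in s by apply: mem_nth.
  have [h1 [h2 h3]] := he x xs.
  have [cin dc] := hcf x.
  rewrite /good_pt /= cenE; split; first exact: hnf.
  split; first by rewrite index_mem.
  split=> //; split.
  + move=> y hy; apply: h1; have := d_tri Hd x (cf x) y.
    rewrite (d_sym Hd x (cf x)); lra.
  + move=> y hy; apply: h2; have := d_tri Hd x (cf x) y.
    rewrite (d_sym Hd x (cf x)); lra.
- move=> x0 e1 i i' hi hi' nii'; rewrite (key x0) // (key x0) //.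
  rewrite /good_pair /= !cenE.
  set x := nth x0 s i; set x' := nth x0 s i'.
  have xs : x \in s by apply: mem_nth.
  have xs' : x' \in s by apply: mem_nth.
  have xx' : x' <> x.
    move=> /eqP; rewrite nth_uniq // => /eqP h; exact: nii' (esym h).
  have [h1 [h2 h3]] := he x xs.
  move=> u v hu hv; apply: (h3 x') => //.
  + have := d_tri Hd x (cf x) u; rewrite (d_sym Hd x (cf x)).
    have := (hcf x).2; lra.
  + have := d_tri Hd x' (cf x') v; rewrite (d_sym Hd x' (cf x')).
    have := (hcf x').2; lra.
Qed.

Lemma in_seq_nth (X : eqType) (s : seq X) x :
  x \in s -> exists i, (i < size s)%N /\ x = nth x s i.
Proof. by move=> xs; exists (index x s); rewrite index_mem nth_index. Qed.

Lemma lt_2rad a m : (a < rad m)%R -> (a < 2 * rad m)%R.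
Proof. have := rad_gt0 m; lra. Qed.

Lemma cross (X : topologicalType) (G : X -> X -> Prop) d (Hd : isMetric d)
  (A : nat -> set X) (Ln : nat -> seq X) (p q : PG_cond G) c :
  matches d A Ln p c -> matches d A Ln q c ->
  forall x y, a_ p x -> a_ q y -> ~ G x y.
Proof.
move=> [sp [szp [ap [gp pp]]]] [sq [szq [aq [gq pq]]]] x y.
rewrite ap aq /= => xs ys.
have [i [hi ->]] := in_seq_nth xs.
have [i' [hi' ->]] := in_seq_nth ys.
rewrite szp in hi; rewrite szq in hi'.
have e0 : entry := (0, (0, 0))%N.
have [_ [sz1 [d1 _]]] := gq y e0 i' hi'.
have [A2 _] := gq y e0 i' hi'.
have [_ [sz0 [d0 [_ l0]]]] := gp x e0 i hi.
have [eii|nii'] := eqVneq i i'.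
- subst i'; apply: l0; last exact: A2.
  rewrite (cen_indep (nth x sp i) (nth y sq i)) //; exact: Rlt_le.
- apply: (pp x e0 i i' hi hi' (fun h => (negP nii') (introT eqP h))).
  + exact: Rlt_le.
  + rewrite (cen_indep (nth x sp i') (nth y sq i')) //; exact: Rlt_le.
Qed.

Lemma centered (X : topologicalType) (G : X -> X -> Prop) d (Hd : isMetric d)
  (A : nat -> set X) (Ln : nat -> seq X) (p q : PG_cond G) c :
  matches d A Ln p c -> matches d A Ln q c -> compatible (@PG_le X G) p q.
Proof.
move=> mp mq.
have Hsub : forall (p q : PG_cond G), matches d A Ln p c -> matches d A Ln q c ->
    a_ p `<=` o_ q.
  move=> p' q' [sp [szp [ap [gp pp]]]] [sq [szq [aq [gq pq]]]] x.
  rewrite ap /= => xs.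
  have [i [hi ->]] := in_seq_nth xs.
  rewrite szp in hi.
  have e0 : entry := (0, (0, 0))%N.
  have [_ [sz1 [d1 [o1 _]]]] := gq x e0 i hi.
  have [_ [sz0 [d0 _]]] := gp x e0 i hi.
  apply: o1; rewrite (cen_indep (nth x sq i) (nth x sp i)) //.
  exact: lt_2rad.
have fin : finite_set (a_ p `|` a_ q) by rewrite finite_setU; split; apply: a_finite.
have ac : anticlique G (a_ p `|` a_ q).
  move=> x y [xp|xq] [yp|yq] nxy.
  - exact: (a_anticlique (p := p)).
  - exact: (cross Hd mp mq).
  - exact: (cross Hd mq mp).
  - exact: (a_anticlique (p := q)).
have op : open (o_ p `&` o_ q) by apply: openI; apply: o_open.
have sub : a_ p `|` a_ q `<=` o_ p `&` o_ q.
  move=> x [xp|xq]; split.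
  - exact: a_sub_o.
  - exact: (Hsub p q).
  - exact: (Hsub q p).
  - exact: a_sub_o.
exists (PGCond fin ac op sub); split; split=> /=.
- by move=> x xp; left.
- by move=> x [].
- by move=> x xq; right.
- by move=> x [].
Qed.

Lemma ccc_part (X : topologicalType) (G : X -> X -> Prop) d (Hd : isMetric d)
  (A : nat -> set X) (Ln : nat -> seq X) :
  (forall p : PG_cond G, exists c, matches d A Ln p c) -> ccc (@PG_le X G).
Proof.
move=> ex Ac hA.
have [cf hcf] := choice ex.
apply/countable_injP; exists (fun p => choice.pickle (cf p)).
move=> p q; rewrite !in_setE => pA qA /(pcan_inj choice.pickleK) e.
apply: contrapT => npq; apply: (hA p q pA qA npq).
apply: (centered Hd (hcf p)); rewrite e; exact: hcf.
Qed.

Lemma filter_forall_lt (T : Type) (F : set_system T) {FF : Filter F} N (P : nat -> set T) :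
  (forall i, (i < N)%N -> F (P i)) -> F [set k | forall i, (i < N)%N -> P i k].
Proof.
elim: N => [|N IH] h.
  by apply: filterS filterT => k _ i.
have h1 := IH (fun i hi => h i (ltnW hi)).
have h2 := h N (ltnSn N).
apply: filterS (filterI h1 h2) => k [k1 k2] i; rewrite ltnS leq_eqVlt.
by case/orP => [/eqP ->|/k1].
Qed.

Lemma filter_forall_seq (T : Type) (U : eqType) (F : set_system T) {FF : Filter F}
  (t : seq U) (P : U -> set T) :
  (forall y, y \in t -> F (P y)) -> F [set k | forall y, y \in t -> P y k].
Proof.
elim: t => [|a t IH] h.
  by apply: filterS filterT => k _ y.
have h1 := IH (fun y hy => h y (@mem_behead _ (a :: t) y hy)).
have h2 := h a (mem_head _ _).
apply: filterS (filterI h1 h2) => k [k1 k2] y; rewrite in_cons.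
by case/orP => [/eqP ->|/k1].
Qed.

Lemma le_2rad a m : (a <= rad m)%R -> (a < 2 * rad m)%R.
Proof. have := rad_gt0 m; lra. Qed.

Lemma limit (X : topologicalType) (G : X -> X -> Prop) d (Hd : isMetric d)
  (A : nat -> set X) (Ln : nat -> seq X) :
  compact [set: X] -> closed_graph G -> (forall n, loose G (A n)) ->
  forall c (qf : nat -> PG_cond G), (forall k, matches d A Ln (qf k) c) ->
  exists qs : PG_cond G, forall r, PG_le r qs -> forall j0,
    exists k, (j0 <= k)%N /\ compatible (@PG_le X G) r (qf k).
Proof.
move=> cX cG lA c qf hq.
have [sf hsf] := choice hq.
have Gsym : forall x y, G x y -> G y x by case: cG => [[h _] _].
have [N0|Npos] := eqVneq (size c) 0%N.
  have emp : forall k, a_ (qf k) = set0.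
    move=> k; have [sz [ak _]] := hsf k; rewrite ak.
    by move: sz; rewrite N0 => /size0nil ->; apply/seteqP; split=> x.
  have ac0 : anticlique G (set0 : set X) by [].
  have sub0 : (set0 : set X) `<=` set0 by [].
  exists (PGCond (finite_set0 X) ac0 open0 sub0) => r [_ hro] j0.
  exists j0; split=> //; exists r; split; split=> //=.
  - by rewrite emp.
  - by move=> x /hro.
have [x0 _] : exists x0 : X, True.
  have [sz _] := hsf 0%N; move: sz; case: (sf 0%N) => [|x s] /=.
    by move=> h; rewrite -h eqxx in Npos.
  by exists x.
set N := size c.
pose pts k i := nth x0 (sf k) i.
have e0 : entry := (0, (0, 0))%N.
pose en i := nth e0 c i.
pose cn i := cen Ln (en i) x0.
have gp : forall k i, (i < N)%N -> good_pt d A Ln (qf k) (en i) (pts k i).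
  by move=> k i hi; have [_ [_ [h _]]] := hsf k; apply: h.
have cnE : forall k i, (i < N)%N -> cen Ln (en i) (pts k i) = cn i.
  by move=> k i hi; have [_ [h _]] := gp k i hi; apply: cen_indep.
have [U [UU sub]] := ultraFilterLemma (@eventually_filter).
have UF : ProperFilter U by apply: ultra_proper.
have hcl : forall i, exists x, cluster ((fun k => pts k i) @ U) x.
  move=> i; have [x [_ hx]] := cX _ (fmap_proper_filter (fun k => pts k i) UF) filterT.
  by exists x.
have [xf hxf] := choice hcl.
have L1 : forall i e, (0 < e)%R -> U [set k | (d (xf i) (pts k i) < e)%R].
  move=> i e e0'.
  have [//|hC] := in_ultra_setVsetC [set k | (d (xf i) (pts k i) < e)%R] UU.
  have [y [hy1 hy2]] := hxf i [set y | ~ (d (xf i) y < e)%R] _ hC (ball_nbhs Hd (xf i) e0').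
  by [].
have L2 : forall i, (i < N)%N -> (d (cn i) (xf i) <= rad (en i).2.1)%R.
  move=> i hi; apply: Rnot_lt_le => hlt.
  set del := (d (cn i) (xf i) - rad (en i).2.1)%R.
  have del0 : (0 < del)%R by rewrite /del; lra.
  have [k hk] := filter_ex (L1 i del del0).
  have [_ [_ [dk _]]] := gp k i hi.
  rewrite cnE // in dk.
  have := d_tri Hd (cn i) (pts k i) (xf i).
  rewrite (d_sym Hd (pts k i) (xf i)).
  move: hk dk; rewrite /del /=.
  move: (d (cn i) (xf i)) (d (cn i) (pts k i)) (d (xf i) (pts k i)) (rad (en i).2.1).
  move=> a b e r; lra.
pose aS := xf @` [set i | (i < N)%N].
pose oS := [set y | exists i, (i < N)%N /\ (d (cn i) y < 2 * rad (en i).2.1)%R].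
have finS : finite_set aS by apply: finite_image; apply: finite_II.
have acS : anticlique G aS.
  move=> _ _ [i hi <-] [i' hi' <-] nxy.
  have nii' : i <> i' by move=> h; apply: nxy; rewrite h.
  have [_ [_ [_ hp]]] := hsf 0%N.
  apply: (hp x0 e0 i i' hi hi' nii').
  - rewrite -/(en i) -/(pts 0%N i) cnE //; exact: L2.
  - rewrite -/(en i') -/(pts 0%N i') cnE //; exact: L2.
have opS : open oS.
  apply/(d_open Hd) => y [i [hi hy]].
  exists (2 * rad (en i).2.1 - d (cn i) y)%R; split; first lra.
  move=> z hz; exists i; split=> //.
  have := d_tri Hd (cn i) y z.
  move: hz hy; move: (d (cn i) y) (d y z) (d (cn i) z) (rad (en i).2.1).
  move=> a b e r; lra.
have subS : aS `<=` oS.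
  by move=> _ [i hi <-]; exists i; split=> //; apply: le_2rad; apply: L2.
exists (PGCond finS acS opS subS) => r [har hro] j0 /=.
have [t ht] := (finite_seqP (a_ r)).1 (a_finite r).
have xr : forall i, (i < N)%N -> a_ r (xf i).
  by move=> i hi; apply: har; exists i.
have US : U [set k | [/\ (j0 <= k)%N,
    (forall i, (i < N)%N -> o_ r (pts k i)) &
    (forall i, (i < N)%N -> forall y, y \in t -> ~ G y (pts k i))]].
  have h1 : U [set k | (j0 <= k)%N] by apply: sub; exists j0.
  have h2 : U [set k | forall i, (i < N)%N -> o_ r (pts k i)].
    apply: filter_forall_lt => i hi.
    have [e [e0' he]] := open_ball Hd (o_open r) (a_sub_o (xr i hi)).
    by apply: filterS (L1 i e e0') => k /he.
  have h3 : U [set k | forall i, (i < N)%N -> forall y, y \in t -> ~ G y (pts k i)].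
    apply: (filter_forall_lt (P := fun i => [set k | forall y, y \in t -> ~ G y (pts k i)])).
    move=> i hi; apply: (filter_forall_seq (P := fun y => [set k | ~ G y (pts k i)])) => y yt.
    have [->|yx] := pselect (y = xf i).
      have [e [e0' he]] := loose_ball Hd (lA (en i).1) (xf i).
      apply: filterS (L1 i e e0') => k hk; apply: he => //.
      by have [] := gp k i hi.
    have yr : a_ r y by rewrite ht.
    have nG : ~ G y (xf i).
      by apply: (a_anticlique (p := r)) => //; apply: xr.
    have [e [e0' he]] := box Hd cG nG yx.
    apply: filterS (L1 i e e0') => k hk; apply: he => //.
    by rewrite d_xx.
  apply: filterS (filterI h1 (filterI h2 h3)) => k [k1 [k2 k3]]; split.
  - exact: k1.
  - exact: k2.
  - exact: k3.
have [k [k1 k2 k3]] := filter_ex US.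
exists k; split=> //.
have [szk [ak [gk _]]] := hsf k.
have inqk : forall z, a_ (qf k) z -> exists i, (i < N)%N /\ z = pts k i.
  move=> z; rewrite ak /= => zs.
  have [i [hi ->]] := in_seq_nth zs.
  exists i; split; first by rewrite /N -szk.
  by rewrite /pts (set_nth_default x0).
have s1 : a_ r `<=` o_ (qf k).
  move=> y /a_sub_o /hro [i [hi hy]].
  have [_ [_ [_ [ho _]]]] := gp k i hi.
  by apply: ho; rewrite cnE.
have s2 : a_ (qf k) `<=` o_ r.
  by move=> z /inqk [i [hi ->]]; apply: k2.
have fin : finite_set (a_ r `|` a_ (qf k)) by rewrite finite_setU; split; apply: a_finite.
have ac : anticlique G (a_ r `|` a_ (qf k)).
  have cr : forall y z, a_ r y -> a_ (qf k) z -> ~ G y z.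
    move=> y z yr /inqk [i [hi ->]]; apply: k3 => //; move: yr; by rewrite ht.
  move=> x y [xp|xq] [yp|yq] nxy.
  - exact: (a_anticlique (p := r)).
  - exact: cr.
  - by move=> /Gsym; apply: cr.
  - exact: (a_anticlique (p := qf k)).
have op : open (o_ r `&` o_ (qf k)) by apply: openI; apply: o_open.
have sub2 : a_ r `|` a_ (qf k) `<=` o_ r `&` o_ (qf k).
  move=> x [xp|xq]; split.
  - exact: a_sub_o.
  - exact: s1.
  - exact: s2.
  - exact: a_sub_o.
exists (PGCond fin ac op sub2); split; split=> /=.
- by move=> x xp; left.
- by move=> x [].
- by move=> x xq; right.
- by move=> x [].
Qed.

Lemma bound (X : topologicalType) (G : X -> X -> Prop) d (Hd : isMetric d)
  (A : nat -> set X) (Ln : nat -> seq X) :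
  compact [set: X] -> closed_graph G -> (forall n, loose G (A n)) ->
  forall nm : nat -> nat -> set (PG_cond G), real_name (@PG_le X G) nm ->
  forall c n, exists K, forall q, matches d A Ln q c ->
    exists s j, PG_le s q /\ (j <= K)%N /\ nm n j s.
Proof.
move=> cX cG lA nm [down [_ dense]] c n.
apply: contrapT => hno.
have hK : forall K, exists q, matches d A Ln q c /\
    ~ (exists s j, PG_le s q /\ (j <= K)%N /\ nm n j s).
  move=> K; apply: contrapT => h; apply: hno; exists K => q mq.
  apply: contrapT => h'; apply: h; exists q; split=> //.
have [qf hqf] := choice hK.
have [qs hqs] := limit Hd cX cG lA (fun k => (hqf k).1).
have lerefl : PG_le qs qs by split.
have [r [rle [j _ hj]]] := dense n qs qs lerefl.
have [k [jk [s [s1 s2]]]] := hqs r rle j.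
apply: (hqf k).2; exists s, j; split=> //; split=> //.
exact: down hj s1.
Qed.

Theorem corollary3p9 (X : topologicalType) (G : X -> X -> Prop) :
  compact [set: X] -> metrizable X -> closed_graph G ->
  (exists A : nat -> set X, (forall n, loose G (A n)) /\
                            [set: X] = \bigcup_n A n) ->
  ccc (@PG_le X G) /\ ~ adds_dominating_real (@PG_le X G).
Proof.
move=> cX [d Hd'] cG [A [lA hcov]].
have Hd : isMetric d := Hd'.
have cov : forall x, exists n, A n x.
  move=> x; have : [set: X] x by [].
  by rewrite hcov => -[n _ h]; exists n.
have hLn : forall m, exists s : seq X, forall x, exists c, c \in s /\ (d c x < rad m)%R.
  by move=> m; apply: (net Hd cX (rad_gt0 m)).
have [Ln hLn'] := choice hLn.
have ex := exists_code Hd cG lA cov hLn'.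
split; first exact: ccc_part ex.
move=> [nm [Hnm [p Hp]]].
have hb := @bound X G d Hd A Ln cX cG lA nm Hnm.
have [Kp hKp] := choice (fun cn : seq entry * nat => hb cn.1 cn.2).
pose g n := (\max_(i < n.+1)
   (if choice.unpickle (i : nat) is Some c then Kp (c, n) else 0%N)).+1.
have Hg : forall (c : seq entry) n, (choice.pickle c <= n)%N -> (Kp (c, n) < g n)%N.
  move=> c n hc; rewrite /g ltnS.
  apply: (leq_trans _ (@leq_bigmax _ (fun i : 'I_n.+1 =>
    if choice.unpickle (i : nat) is Some c then Kp (c, n) else 0%N)
    (Ordinal (hc : (choice.pickle c < n.+1)%N)))).
  change (Kp (c, n) <= (if choice.unpickle (choice.pickle c) is Some c' then Kp (c', n) else 0%N))%N.
  by rewrite choice.pickleK.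
have lerefl : PG_le p p by split.
have [q [qle [m hm]]] := Hp g p lerefl.
have [c mc] := ex q.
set n := maxn m (choice.pickle c).
have fg := hm n (leq_maxl _ _).
have [s [j [sle [jK hs]]]] := hKp (c, n) q mc.
have [r [rs [k hk hr]]] := fg s sle.
have [down [disj _]] := Hnm.
apply: (disj n j k r _ (down _ _ _ _ hs rs) hr).
move=> ejk; subst k.
have := Hg c n (leq_maxr _ _).
move: hk jK => /= hk jK.
have := leq_trans hk jK.
by move=> h1 h2; have := leq_ltn_trans h1 h2; rewrite ltnn.
Qed.
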